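(* Let $U$ be a totally ordered universe of integers and let $A\subseteq U$ be a set of $n$ integers stored in sorted order $A[1]<A[2]<\dots<A[n]$. Fix an integer $k=O(n)$ and let $D_k$ be the Binning Learned version of a dictionary ${\cal SD}$ built on $A$ with $k$ bins (as described in the context). Let $\Delta=G_{\max}/G_{\min}$ be the gap ratio of $A$. Assume that ${\cal SD}$ can be built in $O(c\,g(c))$ time on $c$ elements, where $g$ is convex and non-decreasing, and that searching in ${\cal SD}$ can be done in $O(f(c))$ time when it contains $c$ elements. Then $D_k$ can be built in $O(n\,g(n))$ time, and, given any element $x\in U$, the time to search for $x$ in $D_k$ is $O\!\left(f\!\left(\min\left(n,\frac{n\Delta}{k}\right)\right)\right)$.
   Context: A (static sorted set) dictionary ${\cal SD}$ over a sorted set $A\subseteq U$ supports $search(x)$, returning TRUE iff $x\in A$. Binning construction $D_k$: the range $[A[1],A[n]]$ of the universe is divided into $k$ consecutive bins $B_1,\dots,B_k$, each representing a range of integers of size $\frac{A[n]-A[1]}{k}$; each bin is associated with the (sorted) elements of $A$ falling into its range. For each bin a separate copy of ${\cal SD}$ is built containing exactly the elements of $A$ in that bin, and an auxiliary array of length $k$ stores in its $j$-th entry a pointer to the structure of bin $j$ (possibly empty). To query $x\in U$, one computes the bin index $i=\left\lceil \frac{(x-A[1])k}{A[n]-A[1]}\right\rceil$ and searches for $x$ in the ${\cal SD}$ of bin $i$. The gap ratio is $\Delta=\frac{G_{\max}}{G_{\min}}$, where $G_{\max}$ and $G_{\min}$ are the maximum and minimum distance $A[i+1]-A[i]$ between consecutive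 elements of $A$ (so $G_{\min}>0$). *)

(* Defs.v *)
From mathcomp Require Import all_boot all_order all_algebra.
Set Implicit Arguments. Unset Strict Implicit. Unset Printing Implicit Defensive.
Import Order.TTheory GRing.Theory Num.Theory.
Local Open Scope ring_scope.

Definition Afirst (A : seq int) : int := head 0 A.
Definition Alast (A : seq int) : int := last 0 A.

(* ceiling of p / q for q > 0 (integer arithmetic, floor division) *)
Definition ceil_div (p q : int) : int := ((p + q - 1) %/ q)%Z.

(* bin index  i = ceil((x - A[1]) k / (A[n] - A[1]))  of x in [A[1], A[n]];
   the element A[1] itself (for which the formula gives 0) is put in bin 1. *)
Definition bin_index (A : seq int) (k : nat) (x : int) : nat :=
  if x == Afirst A then 1%N
  else `|ceil_div ((x - Afirst A) * k%:Z) (Alast A - Afirst A)|%N.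

Definition bin (A : seq int) (k j : nat) : seq int :=
  [seq a <- A | bin_index A k a == j].

(* Building D_k: distribute the n elements into the bins (cost n), allocate the
   auxiliary array of k pointers (cost k), build one copy of SD per bin j = 1..k
   (cost bc (bin A k j)). *)
Definition Dk_build_cost {R : numDomainType} (bc : seq int -> R)
    (A : seq int) (k : nat) : R :=
  ((size A + k)%N)%:R + \sum_(1 <= j < k.+1) bc (bin A k j).

(* Searching x in D_k: compute the bin index (unit cost, including the range
   test), then search x in the SD of that bin (cost sc (bin ..) x); elements
   outside [A[1], A[n]] are rejected directly. *)
Definition Dk_search_cost {R : numDomainType} (sc : seq int -> int -> R)
    (A : seq int) (k : nat) (x : int) : R :=
  1 + (if (Afirst A <= x <= Alast A) then sc (bin A k (bin_index A k x)) x else 0).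

Definition gaps (A : seq int) : seq int :=
  [seq nth 0 A i.+1 - nth 0 A i | i <- iota 0 (size A).-1].

Definition Gmax (A : seq int) : int := \big[Num.max/0]_(d <- gaps A) d.
Definition Gmin (A : seq int) : int := \big[Num.min/Gmax A]_(d <- gaps A) d.

Definition gap_ratio (R : numFieldType) (A : seq int) : R :=
  (Gmax A)%:~R / (Gmin A)%:~R.

Definition convex_nat {R : numDomainType} (g : nat -> R) : Prop :=
  forall c : nat, 2 * g c.+1 <= g c + g c.+2.

(* Main.v *)
Require Import Defs.
From mathcomp Require Import all_boot all_order all_algebra.
From mathcomp Require Import zify ring lra.
Import Order.TTheory GRing.Theory Num.Theory.
Local Open Scope ring_scope.

Lemma path_lower (G : int) x s : 0 <= G ->
  path (fun a b : int => a + G <= b) x s -> x + (size s)%:R * G <= last x s.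
Proof.
move=> G0; elim: s x => [|y s IH] x /=; first by rewrite mul0r addr0.
case/andP=> h1 /IH h2. rewrite -addn1 natrD mulrDl mul1r.
have := h2; lia.
Qed.

Lemma path_upper (G : int) x s :
  path (fun a b : int => b <= a + G) x s -> last x s <= x + (size s)%:R * G.
Proof.
elim: s x => [|y s IH] x /=; first by rewrite mul0r addr0.
case/andP=> h1 /IH h2. rewrite -addn1 natrD mulrDl mul1r.
have := h2; lia.
Qed.

Lemma gaps_nth A i : (i.+1 < size A)%N -> nth 0 A i.+1 - nth 0 A i \in gaps A.
Proof.
move=> hi; apply/mapP; exists i => //; rewrite mem_iota add0n leq0n /=; case: (size A) hi => //=.
Qed.

Lemma Gmax_ge {A d} : d \in gaps A -> d <= Gmax A.
Proof. move=> hd; rewrite /Gmax; exact: (@le_bigmax_seq _ _ _ _ 0 d xpredT (fun x => x) hd isT). Qed.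

Lemma Gmin_le {A d} : d \in gaps A -> Gmin A <= d.
Proof. move=> hd; rewrite /Gmin; exact: (@ge_bigmin_seq _ _ _ _ (Gmax A) d xpredT (fun x => x) hd isT). Qed.

Lemma sorted_gaps (A : seq int) : sorted <%R A -> (2 <= size A)%N -> 0 < Gmin A.
Proof.
move=> /(sortedP 0) sA n2.
have g0 : 0 < nth 0 A 1 - nth 0 A 0.
  by rewrite subr_gt0; apply: sA.
have gm : 0 < Gmax A.
  exact: (lt_le_trans g0 (Gmax_ge (gaps_nth A 0 n2))).

rewrite /Gmin big_seq; apply: (big_ind (fun x => 0 < x)) => //.
  by move=> x y hx hy; rewrite lt_min hx hy.
move=> d /mapP [i]; rewrite mem_iota add0n leq0n /= => hi ->; rewrite subr_gt0; apply: sA.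
by case: (size A) hi.
Qed.

Lemma same_bin (A : seq int) (k : nat) (a b : int) :
  0 < Alast A - Afirst A -> Afirst A <= a -> a < b ->
  bin_index A k a = bin_index A k b ->
  (b - a) * k%:Z <= Alast A - Afirst A.
Proof.
set a1 := Afirst A; set L := Alast A - a1 => L0 ha hab.
rewrite /bin_index -/a1 /ceil_div -/L.
have hbn : (b == a1) = false by apply/eqP; lia.
rewrite hbn.
have k0 : 0 <= k%:Z by [].
have hv : 0 <= (b - a1) * k%:Z by apply: mulr_ge0; lia.
have qb0 : 0 <= (((b - a1) * k%:Z + L - 1) %/ L)%Z by rewrite divz_ge0 //; lia.
have hb1 := ltz_ceil ((b - a1) * k%:Z + L - 1)%R L0.
have hb2 := lez_floor ((b - a1) * k%:Z + L - 1) (lt0r_neq0 L0).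
set qb := (_ %/ L)%Z in qb0 hb1 hb2 *.
case: eqP => [ea|na].
  move=> h1.
  have eq1 : qb = 1 by lia.
  rewrite eq1 in hb1. rewrite ea. nia.
have hu : 0 <= (a - a1) * k%:Z by apply: mulr_ge0; lia.
have qa0 : 0 <= (((a - a1) * k%:Z + L - 1) %/ L)%Z by rewrite divz_ge0 //; lia.
have ha2 := lez_floor ((a - a1) * k%:Z + L - 1) (lt0r_neq0 L0).
set qa := (_ %/ L)%Z in qa0 ha2 *.
move=> h. have eq : qa = qb by lia.
rewrite eq in ha2. rewrite mulrDl in hb1.
rewrite mulrBl. lia.
Qed.

Lemma sorted_rel (A : seq int) (G : int) (r : rel int) : sorted <%R A ->
  (forall i, (i.+1 < size A)%N -> r (nth 0 A i) (nth 0 A i.+1)) -> sorted r A.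
Proof. by move=> _ h; apply/(sortedP 0). Qed.

Lemma head_le (A : seq int) a : sorted <%R A -> a \in A -> Afirst A <= a.
Proof.
case: A => [|y A] //= sA.
have := order_path_min (@lt_trans _ _) sA => /allP al.
rewrite inE => /orP [/eqP -> //| /al]. rewrite /Afirst /=. lia.
Qed.

Lemma L_bounds (A : seq int) : sorted <%R A -> (2 <= size A)%N ->
  ((size A)%:R - 1) <= Alast A - Afirst A <= ((size A)%:R - 1) * Gmax A.
Proof.
move=> sA n2.
have s1 : sorted (fun a b : int => a + 1 <= b) A.
  apply/(sortedP 0) => i hi; move/(sortedP 0): sA => /(_ i hi); lia.
have s2 : sorted (fun a b : int => b <= a + Gmax A) A.
  apply/(sortedP 0) => i hi; have := Gmax_ge (gaps_nth A i hi); rewrite /=; set x := nth _ A i.+1; set y := nth _ A i; lia.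
case: A n2 s1 s2 {sA} => [|y A] //= n2 s1 s2.
have := @path_lower 1 y A ler01 s1; have := @path_upper _ _ _ s2.
rewrite /Alast /Afirst /= -addn1 natrD. lia.
Qed.

Lemma bin_size (A : seq int) (k j : nat) : sorted <%R A -> (2 <= size A)%N ->
  ((size (bin A k j))%:R - 1) * Gmin A * k%:Z <= Alast A - Afirst A.
Proof.
move=> sA n2.
have Gm := sorted_gaps _ sA n2.
have /andP[L1 _] := L_bounds _ sA n2.
have L0 : 0 < Alast A - Afirst A by move: L1; rewrite -(subnK n2) natrD; lia.
have sG : sorted (fun a b : int => a + Gmin A <= b) A.
  apply/(sortedP 0) => i hi; have := Gmin_le (gaps_nth A i hi).
  rewrite /=; set x := nth _ A i.+1; set y := nth _ A i; lia.
have sb : sorted (fun a b : int => a + Gmin A <= b) (bin A k j).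
  apply: sorted_filter => // y x z /=; lia.
have : forall a, a \in bin A k j -> a \in A /\ bin_index A k a = j.
  by move=> a; rewrite mem_filter => /andP[/eqP -> ->].
case: (bin A k j) sb => [|x s] /= sb hin.
  have : 0 <= Gmin A * k%:Z by apply: mulr_ge0; lia.
  lia.
have [xA xj] := hin x (mem_head _ _).
have [lA lj] := hin (last x s) (mem_last _ _).
have hp := path_lower _ _ _ (ltW Gm) sb.
case: s sb hin hp lA lj => [|z s] sb hin hp lA lj.
  rewrite /= subrr mul0r mul0r; lia.
have hxl : x < last x (z :: s).
  move: hp; rewrite /=; set q := size s; lia.
have := same_bin _ _ _ _ L0 (head_le _ _ sA xA) hxl (etrans xj (esym lj)).
move: hp. rewrite -[(size (z :: s)).+1]addn1 natrD addrK.
have k0 : 0 <= k%:Z by [].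
nia.
Qed.

Lemma mono_nat (R : numDomainType) (f : nat -> R) :
  (forall c, f c <= f c.+1) -> forall a b, (a <= b)%N -> f a <= f b.
Proof.
move=> h a b /subnK <-; elim: (b - a)%N => [|d IH]; rewrite ?add0n // addSn.
exact: le_trans IH (h _).
Qed.

Lemma sum_bins (h : int -> nat) (k : nat) (s : seq int) :
  (\sum_(1 <= j < k.+1) size [seq a <- s | h a == j] <= size s)%N.
Proof.
elim: s => [|a s IH] /=; first by rewrite big1.
have E : forall j, size [seq x <- a :: s | h x == j] =
   ((h a == j) + size [seq x <- s | h x == j])%N by move=> j /=; case: eqP.
rewrite (eq_bigr _ (fun j _ => E j)) big_split /=.
have : (\sum_(1 <= j < k.+1) (h a == j) <= 1)%N.
  rewrite (eq_bigr (fun j => if h a == j then 1%N else 0%N)); last by move=> j _; case: eqP.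
  rewrite -big_mkcond sum1_count.
  have -> : count (fun j => h a == j) (index_iota 1 k.+1) = count_mem (h a) (index_iota 1 k.+1).
    by apply: eq_count => j; rewrite eq_sym.
  by rewrite count_uniq_mem ?iota_uniq // leq_b1.
move: IH; lia.
Qed.

Theorem theorem1 (R : archiRealFieldType)
  (bc : seq int -> R) (sc : seq int -> int -> R) (g f : nat -> R) (Cb Cs : R)
  (g_convex : convex_nat g)
  (g_nondecr : forall c : nat, g c <= g c.+1)
  (g_pos : 0 < g 1%N)
  (f_nondecr : forall c : nat, f c <= f c.+1)
  (Hbuild : forall s : seq int, sorted <%R s ->
      bc s <= Cb * Num.max 1 ((size s)%:R * g (size s)))
  (Hsearch : forall (s : seq int) (x : int), sorted <%R s ->
      sc s x <= Cs * Num.max 1 (f (size s)))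
  (K : nat) :
  exists C : R, forall (A : seq int) (k : nat),
    sorted <%R A -> (2 <= size A)%N -> (0 < k)%N -> (k <= K * size A)%N ->
    Dk_build_cost bc A k <= C * ((size A)%:R * g (size A)) /\
    (forall x : int,
       Dk_search_cost sc A k x <=
       C * Num.max 1 (f (minn (size A)
              `|Num.ceil ((size A)%:R * gap_ratio R A / k%:R)|%N))).
Proof.
set X := (1 + K%:R) * (1 + `|Cb|) : R.
set Y := X / g 1%N.
have X0 : 0 <= X by apply: mulr_ge0; apply: addr_ge0.
have Y0 : 0 <= Y by apply: divr_ge0 => //; exact: ltW.
exists (Y + `|Cb| + 1 + `|Cs|) => A k sA n2 k0 kK.
set n := size A.
have sbin : forall j, sorted <%R (bin A k j).
  by move=> j; apply: sorted_filter => //; exact: lt_trans.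
have sizebin : forall j, (size (bin A k j) <= n)%N.
  by move=> j; rewrite size_filter count_size.
split.
- have gn1 : g 1%N <= g n by apply: mono_nat => //; lia.
  have gn0 : 0 < g n by exact: lt_le_trans g_pos gn1.
  have hb : forall j, bc (bin A k j) <= `|Cb| + `|Cb| * g n * (size (bin A k j))%:R.
    move=> j; apply: le_trans (Hbuild _ (sbin j)) _.
    have m0 : 0 <= Num.max 1 ((size (bin A k j))%:R * g (size (bin A k j))).
      by rewrite le_max ler01.
    apply: le_trans (ler_wpM2r m0 (ler_norm Cb)) _.
    have : Num.max 1 ((size (bin A k j))%:R * g (size (bin A k j))) <=
           1 + g n * (size (bin A k j))%:R.
      case E: (size (bin A k j)) => [|m].
        by rewrite mul0r mulr0 addr0 ge_max lexx ler01.
      have gm1 : g 1%N <= g m.+1 by apply: mono_nat => //; lia.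
      have gmn : g m.+1 <= g n by apply: mono_nat => //; rewrite -E.
      have hm : 0 <= (m.+1)%:R * g m.+1 :> R.
        by apply: mulr_ge0 => //; apply: ltW; exact: lt_le_trans g_pos gm1.
      have hm2 : (m.+1)%:R * g m.+1 <= g n * (m.+1)%:R :> R.
        by rewrite mulrC; apply: ler_wpM2r.
      rewrite ge_max; apply/andP; split.
        by rewrite lerDl; apply: mulr_ge0 => //; exact: ltW.
      by apply: le_trans hm2 _; rewrite lerDr.
    move=> h; apply: le_trans (ler_wpM2l (normr_ge0 Cb) h) _.
    by rewrite mulrDr mulr1 mulrA.
  rewrite /Dk_build_cost.
  apply: le_trans (lerD (lexx _) (ler_sum _ (fun j _ => hb j))) _.
  rewrite big_split /= sumr_const_nat -mulr_sumr -natr_sum.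
  have hS := sum_bins (bin_index A k) k A.
  set S := (\sum_(1 <= j < k.+1) size (bin A k j))%N.
  have hS' : (S%:R : R) <= n%:R by rewrite ler_nat.
  have hk : (k%:R : R) <= K%:R * n%:R by rewrite -natrM ler_nat.
  have h1 : X * n%:R <= Y * (n%:R * g n).
    have t1 : 1 <= g n / g 1%N by rewrite ler_pdivlMr // mul1r.
    have -> : Y * (n%:R * g n) = X * (n%:R * (g n / g 1%N)).
      by rewrite /Y; field; apply: lt0r_neq0.
    apply: ler_wpM2l => //; rewrite -[X in X <= _]mulr1; apply: ler_wpM2l => //.
  have h3 : `|Cb| * g n * S%:R <= `|Cb| * g n * n%:R.
    by apply: ler_wpM2l => //; apply: mulr_ge0 => //; exact: ltW.
  have h2 : `|Cb| * k%:R <= `|Cb| * (K%:R * n%:R) by apply: ler_wpM2l.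
  have h4 : 0 <= (1 + `|Cs|) * (n%:R * g n).
    by apply: mulr_ge0; [apply: addr_ge0|apply: mulr_ge0 => //; exact: ltW].
  have nk : ((n + k)%N%:R : R) = n%:R + k%:R by rewrite natrD.
  rewrite nk subn1 /= -mulr_natr.
  move: h1 h2 h3 h4 hk; rewrite /X. 
  have hn0 : (0 : R) <= n%:R by [].
  have hCb : 0 <= `|Cb| by [].
  nra.
- move=> x; rewrite /Dk_search_cost.
  set c := Num.ceil _.
  set M := Num.max 1 (f (minn n `|c|%N)).
  have M1 : 1 <= M by rewrite le_max lexx.
  have Gm := sorted_gaps _ sA n2.
  have GM : 0 < Gmax A.
    have := Gmax_ge (gaps_nth A 0 n2); have := Gmin_le (gaps_nth A 0 n2).
    move: Gm; set d := _ - _; lia.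
  have key : forall j, Num.max 1 (f (size (bin A k j))) <= M.
    move=> j; rewrite ge_max M1 /=; rewrite le_max; apply/orP; right.
    apply: mono_nat => //; rewrite leq_min sizebin /=.
    case E: (size (bin A k j)) => [//|m'].
    have hb := bin_size A k j sA n2.
    have /andP[_ hL] := L_bounds A sA n2.
    rewrite -/n E natz in hb; rewrite natz in hL.
    have hi : (m'.+1%:Z - 1) * Gmin A * k%:Z < n%:Z * Gmax A.
      have k0' : 0 <= k%:Z by [].
      nia.
    have hR : (((m'.+1%:Z - 1) * Gmin A * k%:Z)%:~R : R) < (n%:Z * Gmax A)%:~R.
      by rewrite ltr_int.
    rewrite !intrM intrB /= in hR.
    have hc : ((m'.+1%:Z - 1)%:~R : R) < c%:~R.
      apply: lt_le_trans (ceil_ge _); rewrite intrB /gap_ratio.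
      have gm0 : (0 : R) < (Gmin A)%:~R by rewrite ltr0z.
      have kk : (0 : R) < k%:R by rewrite ltr0n.
      rewrite ltr_pdivlMr // mulrA ltr_pdivlMr //.
      move: hR; set a := (Gmin A)%:~R; set b := (Gmax A)%:~R; lra.
    rewrite ltr_int in hc.
    lia.
  have hC : 1 + `|Cs| * M <= (Y + `|Cb| + 1 + `|Cs|) * M.
    have hCb : 0 <= `|Cb| by [].
    have hCs : 0 <= `|Cs| by [].
    nra.
  case: ifP => _; last first.
    apply: le_trans hC; rewrite addr0 lerDl; apply: mulr_ge0 => //; exact: le_trans ler01 M1.
  apply: le_trans hC; rewrite lerD2l.
  apply: le_trans (Hsearch _ x (sbin _)) _.
  have m0 : 0 <= Num.max 1 (f (size (bin A k (bin_index A k x)))).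
    by rewrite le_max ler01.
  apply: le_trans (ler_wpM2r m0 (ler_norm Cs)) _.
  by apply: ler_wpM2l => //; apply: key.
Qed.
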